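(* Let $A=\mathbb C[t]/(t^2)$ and $\lambda\in P^+$, and let $(\lambda_1^{\max},\lambda_2^{\max})$ be as defined below. Then $W_A(0,\lambda)\cong F_{\lambda_1^{\max},\lambda_2^{\max}}$ as $\mathfrak{sl}_n\otimes A$-modules (and hence as $\mathfrak{sl}_n\otimes\mathbb C[t]$-modules).
   Context: $\mathfrak{sl}_n=\mathfrak n^+\oplus\mathfrak h\oplus\mathfrak n^-$, $I=\{1,\dots,n-1\}$, $R^+$ positive roots, $\omega_1,\dots,\omega_{n-1}$ fundamental weights, $P^+$ dominant integral weights; for $\alpha\in R^+$ fix an $\mathfrak{sl}_2$-triple $e_\alpha,f_\alpha,h_\alpha$ with $f_\alpha\in\mathfrak g_{-\alpha}$. For a commutative algebra $A$, $\mathfrak{sl}_n\otimes A$ has bracket $[x\otimes p,y\otimes q]=[x,y]\otimes pq$. For $A=\mathbb C[t]/(t^2)$, the graded local Weyl module $W_A(0,\lambda)$ is the $\mathfrak{sl}_n\otimes A$-module generated by $w$ subject to $(\mathfrak n^+\otimes A).w=0$, $(\mathfrak h\otimes t).w=0$, $(h\otimes1).w=\lambda(h)w$ for $h\in\mathfrak h$, and $(f_\alpha\otimes1)^{\lambda(h_\alpha)+1}.w=0$ for $\alpha\in R^+$. For $\lambda_1,\lambda_2\in P^+$, $\nu=\lambda_1+\lambda_2$, $F_{\lambda_1,\lambda_2}$ is the $\mathfrak{sl}_n\otimes\mathbb C[t]$-module generated by $\mathbb 1$ subject to $(\mathfrak n^+\otimes\mathbb C[t]).\mathbb 1=0$,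 $(\mathfrak h\otimes t\mathbb C[t]).\mathbb 1=0$, $(\mathfrak n^-\otimes t^2\mathbb C[t]).\mathbb 1=0$, $(h\otimes1).\mathbb 1=\nu(h)\mathbb 1$, and for $\alpha\in R^+$: $(f_\alpha\otimes1)^{\nu(h_\alpha)+1}.\mathbb 1=0$, $(f_\alpha\otimes t)^{\min\{\lambda_1(h_\alpha),\lambda_2(h_\alpha)\}+1}.\mathbb 1=0$; it is annihilated by $\mathfrak{sl}_n\otimes t^2\mathbb C[t]$, hence an $\mathfrak{sl}_n\otimes A$-module. Write $\lambda=\sum_{i\in I}m_i\omega_i$ and let $i_1<\dots<i_k$ be the indices $i$ with $m_i$ odd, $I_{odd}=\{i_1,\dots,i_k\}$. Define $\lambda_1^{\max}=\sum_{s=1}^k\frac{m_{i_s}+(-1)^s}{2}\,\omega_{i_s}+\sum_{i\in I\setminus I_{odd}}\frac{m_i}{2}\,\omega_i$ and $\lambda_2^{\max}=\lambda-\lambda_1^{\max}$. *)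

(* Defs.v *)
From HB Require Import structures.
From mathcomp Require Import all_boot all_order all_algebra.
From mathcomp Require Import complex reals.
Set Implicit Arguments. Unset Strict Implicit. Unset Printing Implicit Defensive.
Import Order.TTheory GRing.Theory Num.Theory.
Local Open Scope ring_scope.

(* Conventions.
   sl_n is realised as the traceless n x n matrices over a field C;
   sl_n (x) A, A = C[t]/(t^2), is sl_n (+) sl_n . t, and a representation
   of it on a C-vector space V is given by two maps
     r0 X v = (X (x) 1).v     and     r1 X v = (X (x) t).v
   (only their values on traceless X matter). *)

Record slA_mod (C : fieldType) (n : nat) := SlAMod {
  sm_V :> lmodType C;
  sm_r0 : 'M[C]_n -> sm_V -> sm_V;
  sm_r1 : 'M[C]_n -> sm_V -> sm_V
}.
Arguments sm_r0 {C n} s _ _.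
Arguments sm_r1 {C n} s _ _.

Definition traceless (C : fieldType) (n : nat) (X : 'M[C]_n) := \tr X = 0.

Definition lie_br (C : fieldType) (n : nat) (X Y : 'M[C]_n) := X *m Y - Y *m X.

(* The action of t^a on the second tensor factor: a = 0 <-> 1, a = 1 <-> t. *)
Definition sm_r (C : fieldType) (n : nat) (M : slA_mod C n) (a : bool)
    : 'M[C]_n -> M -> M :=
  if a then sm_r1 M else sm_r0 M.
Arguments sm_r {C n} M a _ _.

(* M is a representation of the Lie algebra sl_n (x) C[t]/(t^2):
   bilinearity and [X (x) t^a, Y (x) t^b] = [X,Y] (x) t^(a+b), t^2 = 0. *)
Definition is_slA_mod (C : fieldType) (n : nat) (M : slA_mod C n) : Prop :=
  [/\ forall (a : bool) (c : C) (X Y : 'M[C]_n) (v : M),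
        traceless X -> traceless Y ->
        sm_r M a (c *: X + Y) v = c *: sm_r M a X v + sm_r M a Y v,
      forall (a : bool) (c : C) (X : 'M[C]_n) (u v : M),
        traceless X -> sm_r M a X (c *: u + v) = c *: sm_r M a X u + sm_r M a X v
    & forall (a b : bool) (X Y : 'M[C]_n) (v : M),
        traceless X -> traceless Y ->
        sm_r M a X (sm_r M b Y v) - sm_r M b Y (sm_r M a X v)
          = (if a && b then 0 else sm_r M (a || b) (lie_br X Y) v)].

Definition is_slA_hom (C : fieldType) (n : nat) (M N : slA_mod C n)
    (f : M -> N) : Prop :=
  [/\ forall (c : C) (u v : M), f (c *: u + v) = c *: f u + f v
    & forall (a : bool) (X : 'M[C]_n) (v : M),
        traceless X -> f (sm_r M a X v) = sm_r N a X (f v)].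

Definition is_slA_iso (C : fieldType) (n : nat) (M N : slA_mod C n)
    (f : M -> N) : Prop := is_slA_hom f /\ bijective f.

(* (M, w) is "the module generated by w subject to the relations Rel":
   it satisfies Rel and is universal among (pointed) modules satisfying Rel. *)
Definition presented (C : fieldType) (n : nat)
    (Rel : forall M : slA_mod C n, M -> Prop) (M : slA_mod C n) (w : M) : Prop :=
  [/\ is_slA_mod M, Rel M w &
      forall (N : slA_mod C n) (w' : N), is_slA_mod N -> Rel N w' ->
        exists f : M -> N,
          [/\ is_slA_hom f, f w = w' &
              forall g : M -> N, is_slA_hom g -> g w = w' -> forall v, g v = f v]].

(* A dominant integral weight lambda = sum_(k=1)^(n-1) m_k omega_k
   is encoded by m : nat -> nat (only m 1, ..., m (n-1) are used).
   Cartan: diagonal traceless matrices; omega_k(diag d) = d_0 + ... + d_(k-1)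
   (0-indexed diagonal entries). *)
Definition wval (C : fieldType) (n : nat) (m : nat -> nat) (H : 'M[C]_n) : C :=
  \sum_(1 <= k < n) (m k)%:R * \sum_(i < n | (i < k)%N) H i i.

(* Positive roots alpha = eps_i - eps_j with i < j (0-indexed),
   e_alpha = E_ij, f_alpha = E_ji, h_alpha = E_ii - E_jj, and
   lambda(h_alpha) = m_(i+1) + ... + m_j. *)
Definition wt (m : nat -> nat) (i j : nat) : nat := \sum_(i.+1 <= k < j.+1) m k.

Definition Ematrix (C : fieldType) (n : nat) (i j : 'I_n) : 'M[C]_n := delta_mx i j.
Arguments Ematrix C {n} i j.

Definition Wrel (C : fieldType) (n : nat) (m : nat -> nat)
    (M : slA_mod C n) (w : M) : Prop :=
  [/\ forall (a : bool) (i j : 'I_n), (i < j)%N -> sm_r M a (Ematrix C i j) w = 0,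
      forall H : 'M[C]_n, is_diag_mx H -> traceless H -> sm_r1 M H w = 0,
      forall H : 'M[C]_n, is_diag_mx H -> traceless H ->
        sm_r0 M H w = wval m H *: w
    & forall (i j : 'I_n), (i < j)%N ->
        iter (wt m i j).+1 (sm_r0 M (Ematrix C j i)) w = 0].

(* Relations of F_{lambda1, lambda2}, read as an sl_n (x) A - module
   (the relation (n^- (x) t^2 C[t]).1 = 0 is automatic there). *)
Definition Frel (C : fieldType) (n : nat) (m1 m2 : nat -> nat)
    (M : slA_mod C n) (w : M) : Prop :=
  [/\ forall (a : bool) (i j : 'I_n), (i < j)%N -> sm_r M a (Ematrix C i j) w = 0,
      forall H : 'M[C]_n, is_diag_mx H -> traceless H -> sm_r1 M H w = 0,
      forall H : 'M[C]_n, is_diag_mx H -> traceless H ->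
        sm_r0 M H w = wval (fun k => m1 k + m2 k) H *: w,
      forall (i j : 'I_n), (i < j)%N ->
        iter (wt (fun k => m1 k + m2 k) i j).+1 (sm_r0 M (Ematrix C j i)) w = 0
    & forall (i j : 'I_n), (i < j)%N ->
        iter (minn (wt m1 i j) (wt m2 i j)).+1 (sm_r1 M (Ematrix C j i)) w = 0].

(* lambda_1^max: if k = i_s is the s-th index (s >= 1) with m_k odd, its
   coefficient is (m_k + (-1)^s)/2; otherwise m_k / 2. *)
Definition odd_rank (m : nat -> nat) (k : nat) : nat :=
  \sum_(1 <= j < k.+1) odd (m j).

Definition lam1max (m : nat -> nat) (k : nat) : nat :=
  if odd (m k) then
    (if odd (odd_rank m k) then ((m k - 1) %/ 2)%N else ((m k + 1) %/ 2)%N)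
  else (m k %/ 2)%N.

Definition lam2max (m : nat -> nat) (k : nat) : nat := (m k - lam1max m k)%N.

(* Main.v *)
Require Import Defs.
From HB Require Import structures.
From mathcomp Require Import all_boot all_order all_algebra.
From mathcomp Require Import complex reals.
From mathcomp Require Import zify ring.
Set Implicit Arguments. Unset Strict Implicit. Unset Printing Implicit Defensive.
Import Order.TTheory GRing.Theory Num.Theory.
Section Parts.
Local Open Scope ring_scope.

Section Lin.
Variables (K : fieldType) (V : lmodType K) (g : V -> V).
Hypothesis L : forall c u v, g (c *: u + v) = c *: g u + g v.
Lemma lin0 : g 0 = 0.
Proof.
have H := L 1 0 0; rewrite !scale1r addr0 in H.
have := congr1 (fun x => x - g 0) H; rewrite /= subrr addrK => <- //.
Qed.
Lemma linZ c u : g (c *: u) = c *: g u.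
Proof. by have := L c u 0; rewrite addr0 lin0 addr0. Qed.
Lemma linD u v : g (u + v) = g u + g v.
Proof. by have := L 1 u v; rewrite !scale1r. Qed.
Lemma iter0 k : iter k g 0 = 0.
Proof. by elim: k => //= k ->; rewrite lin0. Qed.
End Lin.

Lemma iter_comm T (f g : T -> T) : (forall x, f (g x) = g (f x)) ->
  forall N k x, iter N f (iter k g x) = iter k g (iter N f x).
Proof.
move=> C.
have H1 : forall N x, iter N f (g x) = g (iter N f x).
  by elim=> //= N IH x; rewrite IH C.
move=> N; elim=> //= k IH x; by rewrite H1 IH.
Qed.

Section SL2.
Variables (K : numFieldType) (V : lmodType K) (e f h : V -> V).
Hypotheses (le : forall c u v, e (c *: u + v) = c *: e u + e v)
           (lf : forall c u v, f (c *: u + v) = c *: f u + f v).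
Hypothesis ef : forall u, e (f u) - f (e u) = h u.
Hypothesis hf : forall u, h (f u) - f (h u) = (- 2%:R) *: f u.
Variables (u : V) (mu : K).
Hypotheses (eu : e u = 0) (hu : h u = mu *: u).

Lemma hiter k : h (iter k f u) = (mu - (2 * k)%:R) *: iter k f u.
Proof.
elim: k => [|k IH]; first by rewrite /= muln0 subr0.
rewrite iterS.
have -> : h (f (iter k f u)) = f (h (iter k f u)) + (- 2%:R) *: f (iter k f u).
  by rewrite -hf addrC subrK.
rewrite IH (linZ lf) -scalerDl; congr (_ *: _).
rewrite mulnS natrD; ring.
Qed.

Lemma eiter k : e (iter k.+1 f u) = ((k.+1)%:R * (mu - k%:R)) *: iter k f u.
Proof.
elim: k => [|k IH].
  have := ef u; rewrite eu (lin0 lf) subr0 /= hu => ->.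
  by rewrite mul1r subr0.
rewrite iterS.
have -> : e (f (iter k.+1 f u)) = f (e (iter k.+1 f u)) + h (iter k.+1 f u).
  by rewrite -ef addrC subrK.
rewrite IH (linZ lf) hiter -iterS -scalerDl; congr (_ *: _).
rewrite !mulnS !natrD; ring.
Qed.

Lemma kill N : iter N f u = 0 -> (forall k, (k < N)%N -> mu != k%:R) -> u = 0.
Proof.
move=> HN Hmu.
suff: forall d, (d <= N)%N -> iter (N - d) f u = 0.
  by move/(_ N (leqnn N)); rewrite subnn.
elim=> [|d IH] hd; first by rewrite subn0.
have E : (N - d = (N - d.+1).+1)%N by lia.
have := IH (ltnW hd); rewrite E => H0.
have := eiter (N - d.+1); rewrite H0 (lin0 le) => /esym /eqP.
rewrite scaler_eq0 => /orP[|/eqP//].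
rewrite mulf_eq0 pnatr_eq0 /= subr_eq0 => /eqP Em.
by move: (Hmu (N - d.+1)%N); rewrite Em eqxx => /(_ ltac:(lia)).
Qed.
End SL2.

Section Mat.
Variables (K : fieldType) (n : nat) (i j : 'I_n).
Hypothesis nij : i != j.
Let E (a b : 'I_n) := Ematrix K a b.
Lemma br1 : lie_br (E i j) (E j i) = E i i - E j j.
Proof. by rewrite /lie_br /E /Ematrix !mul_delta_mx. Qed.
Lemma br2 : lie_br (E i i - E j j) (E j i) = (- 2%:R) *: E j i + 0.
Proof.
have nji : j != i by rewrite eq_sym.
rewrite /lie_br /E /Ematrix mulmxBl mulmxBr !mul_delta_mx !mul_delta_mx_0 //.
by rewrite addr0 sub0r subr0 scaleNr scaler_nat mulr2n opprD.
Qed.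
Lemma tr_off : traceless (E j i).
Proof.
rewrite /traceless /E /Ematrix -[delta_mx j i](mul_delta_mx (R:=K) i j i).
by rewrite mxtrace_mulC mul_delta_mx_0 ?mxtrace0.
Qed.
Lemma tr_off' : traceless (E i j).
Proof.
rewrite /traceless /E /Ematrix -[delta_mx i j](mul_delta_mx (R:=K) j i j).
by rewrite mxtrace_mulC mul_delta_mx_0 1?eq_sym ?mxtrace0.
Qed.
Lemma tr_H : traceless (E i i - E j j).
Proof.
have T : \tr (delta_mx i i : 'M[K]_n) = \tr (delta_mx j j).
  by rewrite -(mul_delta_mx (R:=K) j i i) mxtrace_mulC mul_delta_mx.
by rewrite /traceless /E /Ematrix raddfB /= T subrr.
Qed.
Lemma diag_H : is_diag_mx (E i i - E j j).
Proof.
apply/is_diag_mxP => a b nab; rewrite /E /Ematrix !mxE.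
have F k : ((a == k) && (k == b)) = false.
  by apply/negbTE/andP => -[/eqP Ea /eqP Eb]; move: nab; rewrite Ea Eb eqxx.
by rewrite -[b == i]eq_sym -[b == j]eq_sym !F subrr.
Qed.
End Mat.

Lemma Wextra (K : numFieldType) n m (M : slA_mod K n) (w : M) :
  is_slA_mod M -> Wrel m w -> forall (i j : 'I_n), (i < j)%N ->
  forall s, (wt m i j < 2 * s)%N -> iter s (sm_r1 M (Ematrix K j i)) w = 0.
Proof.
move=> [Lx Lv Br] [W1 W2 W3 W4] i j lij s hs.
have nij : i != j by apply/eqP => E'; rewrite E' ltnn in lij.
set Eij := Ematrix K i j; set Eji := Ematrix K j i.
set Hd := Ematrix K i i - Ematrix K j j.
have tij : traceless Eij by apply: tr_off'.
have tji : traceless Eji by apply: tr_off.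
have tH : traceless Hd by apply: tr_H.
have t0 : traceless (0 : 'M[K]_n) by rewrite /traceless mxtrace0.
have rX0 a v : sm_r M a 0 v = 0.
  have := Lx a 1 0 0 v t0 t0; rewrite scale1r addr0 scale1r => H.
  have := congr1 (fun x => x - sm_r M a 0 v) H; rewrite /= subrr addrK => <- //.
have Lx0 c X Y v : traceless X -> traceless Y ->
  sm_r0 M (c *: X + Y) v = c *: sm_r0 M X v + sm_r0 M Y v by exact: (Lx false).
have Lx1 c X Y v : traceless X -> traceless Y ->
  sm_r1 M (c *: X + Y) v = c *: sm_r1 M X v + sm_r1 M Y v by exact: (Lx true).
have r00 v : sm_r0 M 0 v = 0 by exact: (rX0 false).
have r10 v : sm_r1 M 0 v = 0 by exact: (rX0 true).
have rL a X : traceless X -> forall c u v, sm_r M a X (c *: u + v) = c *: sm_r M a X u + sm_r M a X v.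
  by move=> tX c u v; apply: Lv.
set e := sm_r0 M Eij; set f := sm_r0 M Eji; set h := sm_r0 M Hd.
set ft := sm_r1 M Eji.
have le : forall c u v, e (c *: u + v) = c *: e u + e v by exact: (rL false).
have lf : forall c u v, f (c *: u + v) = c *: f u + f v by exact: (rL false).
have lft : forall c u v, ft (c *: u + v) = c *: ft u + ft v by exact: (rL true).
have lh1 : forall c u v, sm_r1 M Hd (c *: u + v) = c *: sm_r1 M Hd u + sm_r1 M Hd v
  by exact: (rL true).
have ef u : e (f u) - f (e u) = h u.
  by have := Br false false Eij Eji u tij tji; rewrite /= br1.
have hf u : h (f u) - f (h u) = (- 2%:R) *: f u.
  have := Br false false Hd Eji u tH tji; rewrite /= br2 //= => ->.
  by rewrite Lx0 // r00 addr0.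
set mu0 := wval m Hd.
have ew : e w = 0 by apply: (W1 false).
have hw : h w = mu0 *: w by apply: W3 => //; apply: diag_H.
have fw : iter (wt m i j).+1 f w = 0 by apply: W4.
have H1 k : sm_r1 M Hd (iter k ft w) = 0.
  elim: k => [|k IH] /=; first by apply: W2 => //; apply: diag_H.
  have := Br true true Hd Eji (iter k ft w) tH tji; rewrite /= -/ft IH (lin0 lft) subr0.
  by [].
have E1 k : e (iter k ft w) = 0.
  elim: k => [|k IH] //=.
  have := Br false true Eij Eji (iter k ft w) tij tji; rewrite /= -/ft -/e br1 H1 IH (lin0 lft).
  by rewrite subr0.
have Hk k : h (iter k ft w) = (mu0 - (2 * k)%:R) *: iter k ft w.
  elim: k => [|k IH] /=; first by rewrite muln0 subr0.
  have := Br false true Hd Eji (iter k ft w) tH tji; rewrite /= -/ft -/h br2 // Lx1 // r10 addr0.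
  move=> H; rewrite -[LHS](subrK (ft (h (iter k ft w)))) H IH (linZ lft) -scalerDl.
  congr (_ *: _); rewrite mulnS natrD; ring.
have comm x : f (ft x) = ft (f x).
  have := Br false true Eji Eji x tji tji; rewrite /= -/ft -/f /lie_br subrr r10.
  by move/eqP; rewrite subr_eq0 => /eqP.
have Fk k : iter (wt m i j).+1 f (iter k ft w) = 0.
  by rewrite (iter_comm comm) fw iter0.
case: (boolP [exists k : 'I_(wt m i j).+1, mu0 == (k : nat)%:R]).
- move=> /existsP [k /eqP Ek].
  apply: (kill (e := e) (f := f) (h := h) le lf ef hf (E1 s) (Hk s) (Fk s)).
  move=> k' _; apply/negP => /eqP.
  rewrite Ek => /eqP; rewrite subr_eq -natrD eqr_nat => /eqP Ek'.
  have := ltn_ord k; lia.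
- move=> /existsP nE.
  have w0 : w = 0.
    apply: (kill (e := e) (f := f) (h := h) le lf ef hf ew hw fw).
    move=> k lk; apply/negP => Ek; apply: nE; by exists (Ordinal lk).
  by rewrite w0 iter0.
Qed.
End Parts.

Lemma key_sum m k : (2 * \sum_(1 <= l < k.+1) lam1max m l + odd (odd_rank m k)
   = \sum_(1 <= l < k.+1) m l)%N.
Proof.
elim: k => [|k IH]; first by rewrite /odd_rank !big_geq.
rewrite !(@big_nat_recr _ _ _ k.+1 1) //=.
have Er : odd_rank m k.+1 = (odd_rank m k + odd (m k.+1))%N.
  by rewrite /odd_rank (@big_nat_recr _ _ _ k.+1 1).
have L : lam1max m k.+1 = (if odd (m k.+1) then
    (if odd (odd_rank m k + odd (m k.+1)) then ((m k.+1 - 1) %/ 2)%N else ((m k.+1 + 1) %/ 2)%N)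
  else (m k.+1 %/ 2)%N) by rewrite /lam1max Er.
rewrite L.
move: IH; rewrite Er.
case Ho: (odd (m k.+1)); case Hr: (odd (odd_rank m k)) => /=; rewrite ?addn1 ?addn0 /= ?Hr /=; lia.
Qed.

Lemma lam1_le m k : (lam1max m k <= m k)%N.
Proof. rewrite /lam1max; case Ho: (odd (m k)); case: (odd (odd_rank m k)); lia. Qed.

Lemma wt_dec m i j : (i < j)%N ->
  (\sum_(1 <= l < j.+1) m l = \sum_(1 <= l < i.+1) m l + wt m i j)%N.
Proof. by move=> lij; rewrite /wt -big_cat_nat //; lia. Qed.

Lemma wt_split m i j : (wt (lam1max m) i j + wt (lam2max m) i j = wt m i j)%N.
Proof.
rewrite /wt -big_split /=; apply: eq_bigr => k _.
by rewrite /lam2max subnKC // lam1_le.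
Qed.

Lemma wt_sum m i j : wt (fun k => lam1max m k + lam2max m k)%N i j = wt m i j.
Proof. by apply: eq_bigr => k _; rewrite /lam2max subnKC // lam1_le. Qed.

Lemma wval_sum (K : fieldType) n m (H : 'M[K]_n) :
  wval (fun k => lam1max m k + lam2max m k)%N H = wval m H.
Proof. by apply: eq_bigr => k _; rewrite /lam2max subnKC // lam1_le. Qed.

Lemma bound m i j : (i < j)%N ->
  (wt m i j < 2 * (minn (wt (lam1max m) i j) (wt (lam2max m) i j)).+1)%N.
Proof.
move=> lij.
have Ki := key_sum m i; have Kj := key_sum m j.
have D1 := wt_dec m lij; have D2 := wt_dec (lam1max m) lij.
have Sp := wt_split m i j.
have oi := leq_b1 (odd (odd_rank m i)); have oj := leq_b1 (odd (odd_rank m j)).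
lia.
Qed.
Local Open Scope ring_scope.

Lemma comp_hom (K : fieldType) n (M N P : slA_mod K n) (f : M -> N) (g : N -> P) :
  is_slA_hom f -> is_slA_hom g -> is_slA_hom (g \o f).
Proof.
move=> [f1 f2] [g1 g2]; split => [c u v|a X v tX] /=; first by rewrite f1 g1.
by rewrite f2 // g2.
Qed.

Lemma id_hom (K : fieldType) n (M : slA_mod K n) : is_slA_hom (@id M).
Proof. by split. Qed.

Theorem lemma9p5 (R : realType) (n : nat) (hn : (2 <= n)%N) (m : nat -> nat)
    (MW : slA_mod R[i] n) (w : MW) (MF : slA_mod R[i] n) (one : MF) :
  presented (Wrel m) w ->
  presented (Frel (lam1max m) (lam2max m)) one ->
  exists f : MW -> MF, is_slA_iso f.
Proof.
move=> [mW RW UW] [mF RF UF].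
have FW : Frel (lam1max m) (lam2max m) w.
  have RW' := RW; case: RW' => W1 W2 W3 W4; split => //.
  - by move=> H dH tH; rewrite wval_sum; apply: W3.
  - by move=> i j lij; rewrite wt_sum; apply: W4.
  - move=> i j lij; apply: (Wextra mW RW lij); exact: bound.
have WF : Wrel m one.
  case: RF => F1 F2 F3 F4 F5; split => //.
  - by move=> H dH tH; rewrite -(wval_sum m H); apply: F3.
  - by move=> i j lij; rewrite -(wt_sum m); apply: F4.
have [f [hf fw _]] := UW MF one mF WF.
have [g [hg gone _]] := UF MW w mW FW.
have [k [_ _ Uk]] := UW MW w mW RW.
have [k' [_ _ Uk']] := UF MF one mF RF.
have gf v : g (f v) = v.
  have e1 : (g \o f) w = w by rewrite /= fw gone.
  have := Uk (g \o f) (comp_hom hf hg) e1 v.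
  move=> /= ->; symmetry; exact: (Uk _ (id_hom MW) erefl v).
have fg v : f (g v) = v.
  have e1 : (f \o g) one = one by rewrite /= gone fw.
  have := Uk' (f \o g) (comp_hom hg hf) e1 v.
  move=> /= ->; symmetry; exact: (Uk' _ (id_hom MF) erefl v).
by exists f; split => //; exists g.
Qed.
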